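(* Let $d\geq 1$, $n\geq 1$ and $r$ be integers with $r\geq d+n$. Then a general form $F$ of degree $d$ in $n+1$ variables has an apolar star configuration $\mathbb{X}(r)\subset\mathbb{P}^n$.
   Context: Let $S=\mathbb{C}[x_0,\dots,x_n]$ and $T=\mathbb{C}[y_0,\dots,y_n]$, where $T$ acts on $S$ by differentiation, $y_j=\partial/\partial x_j$. For a form $F\in S$ of degree $d$, $F^\perp=\{\partial\in T:\partial F=0\}$. A finite set of points $\mathbb{X}\subset\mathbb{P}^n=\mathbb{P}(S_1)$ with defining ideal $I(\mathbb{X})\subseteq T$ is apolar to $F$ if $I(\mathbb{X})\subseteq F^\perp$. A star configuration $\mathbb{X}(r)\subset\mathbb{P}^n$: take $r$ linear forms $l_1,\dots,l_r\in T_1$ such that any $n+1$ of them are linearly independent; $\mathbb{X}(r)$ is the set of $\binom{r}{n}$ points obtained by intersecting the hyperplanes $\{l_i=0\}$ $n$ at a time in all possible ways, i.e. the variety defined by $\bigcap_{\{j_1,\dots,j_n\}\subseteq\{1,\dots,r\}}(l_{j_1},\dots,l_{j_n})$. ''A general form'' means any form in a suitable nonempty Zariski open subset of the space of degree $d$ forms. *)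

(* Defs.v *)
From HB Require Import structures.
From mathcomp Require Import all_boot all_order all_algebra.
From mathcomp Require Import Rstruct.
From mathcomp Require Import complex.
From mathcomp Require Import mpoly.
Set Implicit Arguments. Unset Strict Implicit. Unset Printing Implicit Defensive.
Import GRing.Theory Num.Theory.
Local Open Scope ring_scope.

Definition C : closedFieldType := (Rdefinitions.R)[i].

(* Both S = C[x_0..x_n] and T = C[y_0..y_n] are modelled by {mpoly C[n.+1]}. *)

(* Action of T on S by differentiation, y_j = d/dx_j :
   g(d) F = sum_m g_m * d^m F. *)
Definition diff_act (n : nat) (g F : {mpoly C[n]}) : {mpoly C[n]} :=
  \sum_(m <- msupp g) g@_m *: F^`M[m].

(* A point of P^n = P(S_1) is represented by a nonzero vector of
   homogeneous coordinates a : 'I_n.+1 -> C; a form g in T vanishes at it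
   iff g.@[a] = 0. *)
Definition nonzero_vec (n : nat) (a : 'I_n -> C) : Prop := exists i, a i != 0.

Definition any_np1_independent (n r : nat) (l : 'I_r -> {mpoly C[n.+1]}) : Prop :=
  forall s : 'I_n.+1 -> 'I_r, injective s ->
    forall c : 'I_n.+1 -> C, \sum_(k < n.+1) c k *: l (s k) = 0 ->
      forall k, c k = 0.

Definition in_star (n r : nat) (l : 'I_r -> {mpoly C[n.+1]}) (a : 'I_n.+1 -> C)
  : Prop :=
  @nonzero_vec n.+1 a /\
  exists J : {set 'I_r}, #|J| = n /\ forall j, j \in J -> (l j).@[a] = 0.

Definition in_ideal_star (n r : nat) (l : 'I_r -> {mpoly C[n.+1]})
  (g : {mpoly C[n.+1]}) : Prop :=
  forall a, @in_star n r l a -> g.@[a] = 0.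

Definition star_apolar (n r : nat) (l : 'I_r -> {mpoly C[n.+1]})
  (F : {mpoly C[n.+1]}) : Prop :=
  forall g, @in_ideal_star n r l g -> diff_act g F = 0.

Definition has_apolar_star (n r : nat) (F : {mpoly C[n.+1]}) : Prop :=
  exists l : 'I_r -> {mpoly C[n.+1]},
    (forall j, l j \is 1.-homog) /\ @any_np1_independent n r l /\ @star_apolar n r l F.

(* Coordinates on the space S_d of degree-d forms: the coefficients of the
   monomials of degree exactly d. *)
Definition monos_deg (n d : nat) : seq 'X_{1..n} :=
  [seq m <- [seq val m | m : 'X_{1..n < d.+1}] | mdeg m == d].

Definition form_coords (n d : nat) (F : {mpoly C[n]})
  : 'I_(size (monos_deg n d)) -> C :=
  fun i => F@_(nth 0%MM (monos_deg n d) i).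

(* U is a Zariski open subset of S_d (identified with C^N through the
   coordinates above): on S_d it is the complement of the common zero
   locus of a set Sig of polynomials in the coordinates. *)
Definition zariski_open_forms (n d : nat) (U : {mpoly C[n]} -> Prop) : Prop :=
  exists Sig : {mpoly C[size (monos_deg n d)]} -> Prop,
    forall F, F \is d.-homog ->
      (U F <-> exists P, Sig P /\ P.@[@form_coords n d F] != 0).

(* Main.v *)
Require Import Defs.
From HB Require Import structures.
From mathcomp Require Import all_boot all_order all_algebra.
From mathcomp Require Import Rstruct.
From mathcomp Require Import complex.
From mathcomp Require Import mpoly.
From mathcomp Require Import zify.
Import GRing.Theory Num.Theory.
Local Open Scope ring_scope.
Lemma lin_formE {k} {p : {mpoly C[k]}} : p \is 1.-homog ->
  p = \sum_i p@_U_(i) *: 'X_i.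
Proof.
move=> hp; apply/mpolyP=> m; rewrite raddf_sum /=.
have [/mdeg1P [i /eqP ->]|nm] := boolP (mdeg m == 1%N).
  rewrite (bigD1 i) //= mcoeffZ mcoeffXU eqxx mulr1 big1 ?addr0 //.
  by move=> j nji; rewrite mcoeffZ mcoeffXU (negbTE nji) mulr0.
rewrite (dhomog_nemf_coeff hp nm) big1 // => j _.
rewrite mcoeffZ mcoeffX; case: eqP => [e|_]; last by rewrite mulr0.
by move: nm; rewrite -e mdeg1.
Qed.

Lemma lin_evalE {k} {p : {mpoly C[k]}} a : p \is 1.-homog ->
  p.@[a] = \sum_i p@_U_(i) * a i.
Proof.
move=> hp; rewrite {1}(lin_formE hp) raddf_sum /=.
by apply: eq_bigr => i _; rewrite mevalZ mevalXU.
Qed.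

Section Enum.
Variables (r p : nat) (K : {set 'I_r}) (hK : #|K| = p).
Definition enumS (k : 'I_p) : 'I_r := enum_val (cast_ord (esym hK) k).
Lemma enumS_inj : injective enumS.
Proof. by move=> x y /enum_val_inj /cast_ord_inj. Qed.
Lemma enumS_mem k : enumS k \in K.
Proof. exact: enum_valP. Qed.
Lemma enumS_onto j : j \in K -> exists k, enumS k = j.
Proof.
move=> jK; exists (cast_ord hK (enum_rank_in jK j)).
by rewrite /enumS cast_ordK enum_rankK_in.
Qed.
End Enum.
Arguments enumS {r p K} hK k.
Arguments enumS_inj {r p K} hK [x1 x2].
Arguments enumS_mem {r p K} hK k.
Arguments enumS_onto {r p K} hK [j].

Section LinAlg.
Variables (n r : nat) (l : 'I_r -> {mpoly C[n.+1]}).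
Hypothesis lh : forall j, l j \is 1.-homog.
Hypothesis li : any_np1_independent l.

Definition coefM (s : 'I_n.+1 -> 'I_r) : 'M[C]_(n.+1) :=
  \matrix_(i, k) (l (s k))@_U_(i).

Lemma coefM_det {s : 'I_n.+1 -> 'I_r} : injective s -> \det (coefM s) != 0.
Proof.
move=> si; apply/negP; rewrite -det_tr => /det0P [v vn0 vM].
move: vn0; apply/negP; rewrite negbK; apply/eqP/rowP => k; rewrite mxE.
apply: (li s si (fun k => v 0 k) _ k) => /=.
rewrite (eq_bigr (fun k => \sum_i (v 0 k * (l (s k))@_U_(i)) *: 'X_i)); last first.
  move=> k' _; rewrite {1}(lin_formE (lh (s k'))) scaler_sumr.
  by apply: eq_bigr => i _; rewrite scalerA.
rewrite exchange_big /= big1 // => i _; rewrite -scaler_suml.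
rewrite (_ : \sum_(k' < n.+1) _ = 0) ?scale0r //.
have := congr1 (fun M : 'M[C]_(1, n.+1) => M 0 i) vM; rewrite !mxE.
by move=> h; rewrite -[RHS]h; apply: eq_bigr => k' _; rewrite !mxE.
Qed.

Lemma common_zero {s : 'I_n.+1 -> 'I_r} {a} : injective s -> (forall k, (l (s k)).@[a] = 0) ->
  forall i, a i = 0.
Proof.
move=> si h i; have := coefM_det si; apply: contraNeq => ai.
apply/det0P; exists (\row_i a i).
  by apply/eqP => /rowP /(_ i); rewrite !mxE; apply/eqP.
apply/rowP => k; rewrite !mxE -[RHS](h k) lin_evalE //.
by apply: eq_bigr => j _; rewrite !mxE mulrC.
Qed.

Lemma star_pt (J : {set 'I_r}) (hJ : #|J| = n) :
  exists a : 'I_n.+1 -> C, (exists i, a i != 0) /\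
    (forall j, j \in J -> (l j).@[a] = 0) /\
    (forall j, j \notin J -> (l j).@[a] != 0).
Proof.
pose s := enumS hJ.
pose B : 'M[C]_(n.+1, n) := \matrix_(i, k) (l (s k))@_U_(i).
have : kermx B != 0.
  rewrite -mxrank_eq0 mxrank_ker; have := rank_leq_col B.
  by move=> hB; rewrite subn_eq0 -ltnNge ltnS.
move=> /rowV0Pn [v /sub_kermxP vB vn0].
pose a := fun i => v 0 i.
have aJ : forall j, j \in J -> (l j).@[a] = 0.
  move=> j /(enumS_onto hJ) [k <-]; rewrite lin_evalE //.
  have := congr1 (fun M : 'M[C]_(1, n) => M 0 k) vB; rewrite !mxE => h; rewrite -[RHS]h.
  by apply: eq_bigr => i _; rewrite !mxE mulrC.
have an0 : exists i, a i != 0.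
  apply/existsP; apply: contraNT vn0 => /existsPn h.
  by apply/eqP/rowP => i; rewrite mxE; apply/eqP/negPn/h.
exists a; split => //; split => // j jJ; apply/negP => /eqP ljz.
have hK : #|j |: J| = n.+1 by rewrite cardsU1 jJ hJ.
case: an0 => i ai; move/negP: ai; apply; apply/eqP.
apply: (common_zero (s := enumS hK)); first exact: (enumS_inj hK).
move=> k; have := enumS_mem hK k; rewrite in_setU1 => /orP [/eqP ->|] //.
exact: aJ.
Qed.
End LinAlg.

Lemma valZd n m (c : C) (x : dhomog n C m) :
  mpoly_of_dhomog (c *: x) = c *: mpoly_of_dhomog x.
Proof. by []. Qed.

Section Main.
Variables (n r : nat) (l : 'I_r -> {mpoly C[n.+1]}).
Hypothesis lh : forall j, l j \is 1.-homog.
Hypothesis li : any_np1_independent l.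
Hypothesis nr : (n <= r)%N.

Local Notation m := (r - n)%N.

Definition fJ (J : {set 'I_r}) := \prod_(j in ~: J) l j.

Lemma fJ_homog {J : {set 'I_r}} : #|J| = n -> fJ J \is m.-homog.
Proof.
move=> hJ; have -> : m = #|~: J|.
  by have := cardsC J; rewrite hJ card_ord => e; rewrite -{1}e addKn.
rewrite /fJ -sum1_card; apply: (big_ind2 (fun p k => p \is k.-homog)).
- exact: dhomog1.
- by move=> p1 k1 p2 k2 h1 h2; apply: dhomogM.
- by move=> j _; apply: lh.
Qed.

Lemma fJ_eval (J J' : {set 'I_r}) a : #|J| = n -> #|J'| = n ->
  (forall j, j \in J' -> (l j).@[a] = 0) ->
  (forall j, j \notin J' -> (l j).@[a] != 0) ->
  (fJ J).@[a] = if J == J' then (fJ J').@[a] else 0.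
Proof.
move=> hJ hJ' z nz; case: eqP => [-> //|neJ].
have : ~~ (J' \subset J).
  apply/negP => sub; apply: neJ; apply/esym/eqP.
  by rewrite eqEcard sub hJ hJ' leqnn.
case/subsetPn => j jJ' njJ.
by rewrite /fJ rmorph_prod (bigD1 j) ?inE //= z // mul0r.
Qed.

Lemma fJ_eval_ne0 (J : {set 'I_r}) a : 
  (forall j, j \notin J -> (l j).@[a] != 0) -> (fJ J).@[a] != 0.
Proof.
move=> nz; rewrite /fJ rmorph_prod; apply/prodf_neq0 => j.
by rewrite inE => /nz.
Qed.

Definition Js := enum [set J : {set 'I_r} | #|J| == n].
Definition Xs : seq (dhomog n.+1 C m) :=
  [seq @indhomog n.+1 C m (fJ J) | J <- Js].

Lemma Js_card {i} : (i < size Js)%N -> #|(nth set0 Js i)| = n.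
Proof.
move=> hi; have := mem_nth set0 hi; rewrite mem_enum inE.
by move/eqP.
Qed.

Lemma Xs_nth i : (i < size Js)%N -> val (Xs`_i) = fJ ((nth set0 Js i)).
Proof.
move=> hi; rewrite /Xs (nth_map set0) // insubdK //.
by have := fJ_homog (Js_card hi).
Qed.

Lemma Xs_eval (k : 'I_(size Xs) -> C) (i : 'I_(size Xs)) a :
  (forall j, j \in (nth set0 Js i) -> (l j).@[a] = 0) ->
  (forall j, j \notin (nth set0 Js i) -> (l j).@[a] != 0) ->
  (val (\sum_(j < size Xs) k j *: Xs`_j)).@[a] = k i * (fJ ((nth set0 Js i))).@[a].
Proof.
have sz : size Xs = size Js by rewrite size_map.
move=> z nz; rewrite raddf_sum raddf_sum /= (bigD1 i) //= big1 ?addr0.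
  rewrite mevalZ /= Xs_nth //; last by rewrite -sz.
move=> j nji; rewrite mevalZ /= Xs_nth; last by rewrite -sz.
rewrite (fJ_eval (nth set0 Js j) (nth set0 Js i) a) ?Js_card -?sz //.
suff /negbTE -> : (nth set0 Js j) != (nth set0 Js i) by rewrite mulr0.
rewrite nth_uniq ?enum_uniq -?sz //.
Qed.

Lemma vanish_top (h : {mpoly C[n.+1]}) : h \is m.-homog ->
  (forall a, in_star l a -> h.@[a] = 0) -> h = 0.
Proof.
move=> hh hz.
have sz : size Xs = size Js by rewrite size_map.
have key : forall k : 'I_(size Xs) -> C,
    (forall a, in_star l a -> (val (\sum_(j < size Xs) k j *: Xs`_j)).@[a] = 0) ->
    forall i, k i = 0.
  move=> k hk i.
  have hi : (i < size Js)%N by rewrite -sz.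
  have [a [an0 [z nz]]] := @star_pt n r l lh li _ (Js_card hi).
  have ast : in_star l a by split => //; exists (nth set0 Js i); split => //; exact: Js_card.
  have := hk a ast; rewrite (Xs_eval k i a z nz) => /eqP.
  by rewrite mulf_eq0 (negbTE (fJ_eval_ne0 _ _ nz)) orbF => /eqP.
have freeX : free Xs.
  have := freeP (X := in_tuple Xs); rewrite /= => fP; apply/fP => k hk; apply: key => a _.
  by rewrite hk meval0.
have bX : basis_of fullv Xs.
  rewrite basisEfree freeX subvf /= (_ : \dim _ = 'C(m + n, m)); last by rewrite dimvf.
  rewrite sz /Js -cardE card_draws card_ord.
  by rewrite subnK // bin_sub.
set h' := @indhomog n.+1 C m h.
have vh : val h' = h by rewrite insubdK.
have := coord_span (X := in_tuple Xs) (v := h').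
rewrite (span_basis bX) memvf => /(_ isT) eh'.
have c0 := key (fun i => coord (in_tuple Xs) i h').
rewrite -vh eh' big1 ?linear0 // => i _; rewrite c0 ?scale0r //.
by move=> a ast; rewrite /= -eh' vh; apply: hz.
Qed.

End Main.

Lemma homog_scale {k} {q : {mpoly C[k]}} {e} {t : C} {a : 'I_k -> C} :
  q \is e.-homog -> q.@[fun i => t * a i] = t ^+ e * q.@[a].
Proof.
move=> hq; rewrite !mevalE mulr_sumr big_seq [RHS]big_seq.
apply: eq_bigr => mu mu_in; rewrite mulrCA; congr (_ * _).
rewrite (eq_bigr (fun i => t ^+ mu i * a i ^+ mu i)); last by move=> i _; rewrite exprMn.
rewrite big_split /= prodrXr -mdegE.
by rewrite (dhomog_mf hq mu_in).
Qed.

Lemma pihomog_big {k} (g : {mpoly C[k]}) e : (msize g <= e)%N -> pihomog mdeg e g = 0.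
Proof.
move=> he; rewrite pihomogE big1_seq // => mu /andP [/eqP dm mu_in].
by have := msize_mdeg_lt mu_in; rewrite dm ltnNge he.
Qed.

Lemma coef_pihomog {k} (g : {mpoly C[k]}) mu : g@_mu = (pihomog mdeg (mdeg mu) g)@_mu.
Proof.
rewrite pihomogE {1}(mpolyE g) !raddf_sum /= [RHS]big_mkcond /=.
apply: eq_bigr => m' _; rewrite mcoeffZ mcoeffX.
by case: eqP => [->|_]; rewrite ?eqxx // mulr0 if_same.
Qed.

Lemma mderivm_big {k} (F : {mpoly C[k]}) d mu : F \is d.-homog -> (d < mdeg mu)%N ->
  F^`M[mu] = 0.
Proof.
move=> hF hmu; apply/mpolyP => m'; rewrite mcoeff_mderivm mcoeff0.
rewrite (dhomog_nemf_coeff hF) ?mul0rn //.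
change (mdeg (mu + m')%MM != d); rewrite mdegD; apply: contraTneq hmu => <-; by rewrite -leqNgt leq_addr.
Qed.

Lemma natC_eq0 k : ((k%:R : C) == 0) = (k == 0)%N.
Proof. exact: (@pnatr_eq0 (Rdefinitions.R)[i] k). Qed.
Lemma natC_inj : injective (fun k : nat => (k%:R : C)).
Proof. move=> a b /= h. apply/eqP. rewrite -(@eqr_nat (Rdefinitions.R)[i]). exact/eqP. Qed.

Lemma in_star_scale n r (l : 'I_r -> {mpoly C[n.+1]}) (lh : forall j, l j \is 1.-homog)
  a t : t != 0 -> in_star l a -> in_star l (fun i => t * a i).
Proof.
move=> tn0 [[i ai] [J [hJ hz]]]; split.
  by exists i; rewrite mulf_neq0.
exists J; split => // j jJ; rewrite (homog_scale (lh j)) hz ?mulr0 //.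
Qed.

Lemma vanish_pihomog n r (l : 'I_r -> {mpoly C[n.+1]}) (lh : forall j, l j \is 1.-homog)
  (g : {mpoly C[n.+1]}) : in_ideal_star l g ->
  forall e a, in_star l a -> (pihomog mdeg e g).@[a] = 0.
Proof.
move=> hg e a ast.
have [he|he] := leqP (msize g) e; first by rewrite pihomog_big // meval0.
pose P := \poly_(i < msize g) (pihomog mdeg i g).@[a].
have Pt : forall t, t != 0 -> P.[t] = 0.
  move=> t tn0; rewrite horner_poly.
  transitivity (g.@[fun i => t * a i]); last exact: (hg _ (in_star_scale _ _ _ lh _ _ tn0 ast)).
  rewrite [in RHS](pihomog_partitionE (k := msize g) (leqnn _)) raddf_sum /=.
  apply: eq_bigr => i _; rewrite (homog_scale (pihomogP _ _ _)) mulrC //.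
have P0 : P = 0.
  apply: (@roots_geq_poly_eq0 _ P [seq i.+1%:R | i <- iota 0 (msize g)]).
  - by apply/allP => x /mapP [i _ ->]; apply/rootP/Pt; rewrite natC_eq0.
  - rewrite map_inj_uniq ?iota_uniq // => x y /natC_inj; by case.
  - by rewrite size_map size_iota size_poly.
have := congr1 (fun p : {poly C} => p`_e) P0.
by rewrite coef_poly he coef0.
Qed.

Lemma X0_neq0 k : ('X_(ord0 : 'I_k.+1) : {mpoly C[k.+1]}) != 0.
Proof.
apply/eqP => /(congr1 (mcoeff U_(ord0))); rewrite mcoeffXU eqxx mcoeff0.
by apply/eqP; rewrite oner_neq0.
Qed.

Lemma low_vanish n r (l : 'I_r -> {mpoly C[n.+1]}) (lh : forall j, l j \is 1.-homog)
  (li : any_np1_independent l) (nr : (n <= r)%N) g (hg : in_ideal_star l g)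
  e (he : (e <= r - n)%N) : pihomog mdeg e g = 0.
Proof.
set q := pihomog mdeg e g.
have hX : ('X_(ord0 : 'I_n.+1) : {mpoly C[n.+1]}) \is 1.-homog.
  by rewrite dhomogX; apply/eqP; exact: mdeg1.
have hom : q * 'X_ord0 ^+ (r - n - e) \is (r - n).-homog.
  have h1 : q * 'X_ord0 ^+ (r - n - e) \is (e + 1 * (r - n - e)).-homog.
    by apply: dhomogM; [exact: pihomogP | exact: dhomogMn].
  by rewrite mul1n subnKC in h1.
have := @vanish_top n r l lh li nr _ hom.
have z : forall a, in_star l a -> (q * 'X_ord0 ^+ (r - n - e)).@[a] = 0.
  by move=> a ast; rewrite rmorphM /= (vanish_pihomog _ _ _ lh _ hg) // mul0r.
move=> /(_ z) /eqP; rewrite mulf_eq0 expf_eq0 (negbTE (X0_neq0 n)) andbF orbF.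
by move/eqP.
Qed.

Definition moment r n : 'I_r -> {mpoly C[n.+1]} :=
  fun j => \sum_(i < n.+1) (((j : nat)%:R : C) ^+ i) *: 'X_i.

Lemma moment_homog r n j : moment r n j \is 1.-homog.
Proof.
rewrite /moment rpred_sum // => i _; apply: rpredZ.
by rewrite dhomogX; apply/eqP; exact: mdeg1.
Qed.

Lemma moment_coef r n j (i : 'I_n.+1) : (moment r n j)@_U_(i) = ((j : nat)%:R : C) ^+ i.
Proof.
rewrite /moment raddf_sum (bigD1 i) //= mcoeffZ mcoeffXU eqxx mulr1 big1 ?addr0 //.
by move=> i' ni; rewrite mcoeffZ mcoeffXU (negbTE ni) mulr0.
Qed.

Lemma moment_indep r n : any_np1_independent (moment r n).
Proof.
move=> s si c hc.
pose V := Vandermonde n.+1 (\row_k (((s k) : nat)%:R : C)).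
have dV : \det V^T != 0.
  rewrite det_tr det_Vandermonde; apply/prodf_neq0 => i _; apply/prodf_neq0 => j ij.
  rewrite !mxE subr_eq0; apply/eqP => /natC_inj /val_inj /si /eqP.
  by rewrite eq_sym -(inj_eq val_inj) /= (ltn_eqF ij).
have : \row_k c k == 0.
  apply: contraNT dV => cn0; apply/det0P; exists (\row_k c k) => //.
  apply/rowP => i; rewrite !mxE.
  have := congr1 (mcoeff U_(i)) hc; rewrite raddf_sum mcoeff0 => h.
  rewrite -[RHS]h; apply: eq_bigr => k _; rewrite !mxE /= mcoeffZ moment_coef.
  by [].
by move=> /eqP /rowP h k; have := h k; rewrite !mxE.
Qed.

Theorem lemma3p1 (d n r : nat) (hd : (1 <= d)%N) (hn : (1 <= n)%N)
  (hr : (d + n <= r)%N) :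
  exists U : {mpoly C[n.+1]} -> Prop,
    @zariski_open_forms n.+1 d U /\
    (exists F : {mpoly C[n.+1]}, F \is d.-homog /\ U F) /\
    (forall F : {mpoly C[n.+1]}, F \is d.-homog -> U F -> @has_apolar_star n r F).
Proof.
exists (fun _ => True); split.
  exists (fun P => P = 1) => F _; split => // _; exists 1; split => //.
  by rewrite rmorph1 oner_neq0.
split; first by exists 0; split => //; exact: dhomog0.
move=> F hF _; exists (moment r n); split; first exact: moment_homog.
split; first exact: moment_indep.
have nr : (n <= r)%N by lia.
move=> g hg; rewrite /diff_act big1_seq // => mu /andP [_ _].
case: (leqP (mdeg mu) d) => hmu.
  rewrite coef_pihomog (@low_vanish n r (moment r n) (@moment_homog r n) (@moment_indep r n) nr g hg).
    by rewrite mcoeff0 scale0r.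
  lia.
by rewrite (mderivm_big _ _ _ hF hmu) scaler0.
Qed.
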